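(* Let $n\ge 1$, $r\ge 1$ be integers and let $v$ be a vertex of $G(n,r)$, with $d(v)$ its degree in $G(n,r)$. (a) If every positive entry of $v$ equals $r$ (i.e. $v=rP$ for a permutation matrix $P$), then $d(v)=\delta(G(n,r))=\binom{n}{2}$, where $\delta$ denotes the minimum degree. (b) If not every positive entry of $v$ equals $r$, then $d(v)\ge \frac{(n+2)(n-1)}{2}=\binom{n}{2}+n-1$.
   Context: For integers $n,r\ge 1$, $G(n,r)$ is the simple undirected graph whose vertices are the $n\times n$ matrices with non-negative integer entries all of whose row sums and column sums equal $r$. Let $e_{ij}$ be the $n\times n$ matrix with a $1$ in position $(i,j)$ and $0$ elsewhere, and let $\mathcal{B}=\{\pm(e_{ij}+e_{kl}-e_{il}-e_{kj}) : 1\le i<k\le n,\ 1\le j<l\le n\}$ (the Markov moves). Two vertices $u,v$ are adjacent iff $u-v\in\mathcal{B}$. Thus the degree $d(v)$ equals the number of moves $b\in\mathcal{B}$ with $v+b$ having all entries non-negative. *)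

(* Defs.v *)
From HB Require Import structures.
From mathcomp Require Import all_boot all_order all_algebra.
Set Implicit Arguments. Unset Strict Implicit. Unset Printing Implicit Defensive.
Import Order.TTheory GRing.Theory Num.Theory.

Definition is_vertex (n r : nat) (v : 'M[nat]_n) : Prop :=
  (forall i : 'I_n, \sum_(j < n) v i j = r) /\
  (forall j : 'I_n, \sum_(i < n) v i j = r).

Definition move (n : nat) (i j k l : 'I_n) : 'M[int]_n :=
  (delta_mx i j + delta_mx k l - delta_mx i l - delta_mx k j)%R.

Definition moves (n : nat) : seq 'M[int]_n :=
  undup (flatten (flatten (flatten (flatten
    [seq [seq [seq [seq [seq (s *: move i j k l)%R | s <- [:: 1%R; (-1)%R]]
                       | l : 'I_n <- [seq l : 'I_n <- enum 'I_n | (j < l)%N]]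
                  | j : 'I_n <- enum 'I_n]
             | k : 'I_n <- [seq k : 'I_n <- enum 'I_n | (i < k)%N]]
        | i : 'I_n <- enum 'I_n])))).

Definition to_int (n : nat) (v : 'M[nat]_n) : 'M[int]_n := map_mx Posz v.

Definition deg (n : nat) (v : 'M[nat]_n) : nat :=
  count (fun b : 'M[int]_n =>
           [forall i, forall j, (0 <= (to_int v + b) i j)%R]) (moves n).

Definition is_min_degree (n r m : nat) : Prop :=
  (exists w : 'M[nat]_n, is_vertex r w /\ deg w = m) /\
  (forall w : 'M[nat]_n, is_vertex r w -> m <= deg w).

(* Main.v *)
Require Import Defs.
From HB Require Import structures.
From mathcomp Require Import all_boot all_order all_algebra zify.
Set Implicit Arguments. Unset Strict Implicit. Unset Printing Implicit Defensive.
Import Order.TTheory GRing.Theory Num.Theory.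

Lemma move_entry n (i j k l x y : 'I_n) : i != k -> j != l ->
  move i j k l x y =
  (if x == i then (if y == j then 1 else if y == l then -1 else 0)
   else if x == k then (if y == l then 1 else if y == j then -1 else 0) else 0)%R.
Proof.
move=> ik jl; rewrite !mxE.
case: (eqVneq x i) => [->|xi]; case: (eqVneq y j) => [->|yj] /=;
 rewrite ?(negbTE ik) ?(negbTE jl) ?andbF /=;
 (case: (x == k)); (case: (y == l)) => //=.
Qed.

Definition okb n (v : 'M[nat]_n) (b : 'M[int]_n) : bool :=
  [forall i, forall j, (0 <= (to_int v + b) i j)%R].

Lemma deg_okb n (v : 'M[nat]_n) : deg v = count (okb v) (moves n).
Proof. by []. Qed.

Lemma entry_sc n (v : 'M[nat]_n) (s : int) (b : 'M[int]_n) x y :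
  (to_int v + s *: b)%R x y = ((v x y)%:Z + s * b x y)%R.
Proof. by rewrite !mxE. Qed.

Ltac brute x y i j k l :=
  case: (eqVneq x i) => [?|?]; case: (eqVneq x k) => [?|?];
  case: (eqVneq y j) => [?|?]; case: (eqVneq y l) => [?|?]; subst;
  rewrite ?eqxx ?(negbTE ltac:(eassumption)) /=; try lia.

Lemma ok_plus n (v : 'M[nat]_n) (i j k l : 'I_n) : i != k -> j != l ->
  okb v (1 *: move i j k l)%R = (0 < v i l) && (0 < v k j).
Proof.
move=> ik jl; apply/forallP/idP.
- move=> H; apply/andP; split.
  + move: (forallP (H i) l); rewrite entry_sc move_entry // !eqxx eq_sym (negbTE jl) /=.
    lia.
  + move: (forallP (H k) j); rewrite entry_sc move_entry // !eqxx eq_sym (negbTE ik) (negbTE jl) /=.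
    lia.
- case/andP=> H1 H2 x; apply/forallP => y; rewrite entry_sc move_entry //.
  brute x y i j k l.
Qed.

Lemma ok_minus n (v : 'M[nat]_n) (i j k l : 'I_n) : i != k -> j != l ->
  okb v ((-1) *: move i j k l)%R = (0 < v i j) && (0 < v k l).
Proof.
move=> ik jl; apply/forallP/idP.
- move=> H; apply/andP; split.
  + move: (forallP (H i) j); rewrite entry_sc move_entry // !eqxx /=.
    lia.
  + move: (forallP (H k) l); rewrite entry_sc move_entry // !eqxx eq_sym (negbTE ik) /=.
    lia.
- case/andP=> H1 H2 x; apply/forallP => y; rewrite entry_sc move_entry //.
  brute x y i j k l.
Qed.

Lemma supp_move n (s : int) (i j k l x y : 'I_n) : i != k -> j != l -> s != 0%R ->
  ((s *: move i j k l)%R x y != 0%R) = ((x == i) || (x == k)) && ((y == j) || (y == l)).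
Proof.
move=> ik jl s0; rewrite mxE move_entry //.
brute x y i j k l; rewrite ?mulr0 ?mulr1 ?mulrN1 ?oppr_eq0 ?eqxx //= ?(negbTE s0) //.
Qed.

Lemma scale_entry n (s : int) (b : 'M[int]_n) x y : (s *: b)%R x y = (s * b x y)%R.
Proof. by rewrite mxE. Qed.

Lemma move_inj n (s s' : int) (i j k l i' j' k' l' : 'I_n) :
  i < k -> j < l -> i' < k' -> j' < l' -> s != 0%R -> s' != 0%R ->
  (s *: move i j k l = s' *: move i' j' k' l')%R ->
  [/\ i = i', j = j', k = k', l = l' & s = s'].
Proof.
move=> ik jl ik' jl' s0 s0' H.
have m1 : ((-1 : int) != 0)%R by [].
have ikn : i != k by rewrite neq_ltn ik.
have jln : j != l by rewrite neq_ltn jl.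
have ikn' : i' != k' by rewrite neq_ltn ik'.
have jln' : j' != l' by rewrite neq_ltn jl'.
have E x y : ((x == i) || (x == k)) && ((y == j) || (y == l)) =
             ((x == i') || (x == k')) && ((y == j') || (y == l')).
  by rewrite -(supp_move x y ikn jln s0) H supp_move.
move: (E i j) (E k l) (E i' j') (E k' l'); rewrite !eqxx /= ?orbT /=.
move=> /esym /andP [/orP h1 /orP h2] /esym /andP [/orP h3 /orP h4]
       /andP [/orP h5 /orP h6] /andP [/orP h7 /orP h8].
have ei : i = i' by case: h1; case: h5 => /eqP e1 /eqP e2; subst; try done; lia.
have ek : k = k' by case: h3; case: h7 => /eqP e1 /eqP e2; subst; try done; lia.
have ej : j = j' by case: h2; case: h6 => /eqP e1 /eqP e2; subst; try done; lia.
have el : l = l' by case: h4; case: h8 => /eqP e1 /eqP e2; subst; try done; lia.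
subst; split=> //.
have := congr1 (fun M : 'M[int]_n => M i' j') H.
by rewrite !scale_entry move_entry // !eqxx !mulr1.
Qed.

Lemma uniq_of_count (T : eqType) (s : seq T) :
  (forall b, count_mem b s <= 1) -> uniq s.
Proof.
elim: s => [|x s IH] //= H; apply/andP; split.
- have := H x; rewrite /= eqxx add1n ltnS leqn0 => /eqP.
  by move/count_memPn.
- apply: IH => b; apply: (leq_trans _ (H b)); rewrite /=; exact: leq_addl.
Qed.

Lemma sum_witness n (P : pred 'I_n) (F : 'I_n -> nat) :
  0 < \sum_(x < n | P x) F x -> exists2 x, P x & 0 < F x.
Proof.
case: (boolP [exists x, P x && (0 < F x)]) => [/existsP [x /andP [h1 h2]]|H].
  by exists x.
rewrite big1 // => x Px; apply/eqP; rewrite -leqn0 leqNgt; apply/negP => h.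
by move/negP: H; apply; apply/existsP; exists x; rewrite Px h.
Qed.

Lemma sum_delta n (P : pred 'I_n) (F : 'I_n -> nat) (y : 'I_n) (G : nat) :
  (forall x, P x -> F x <= (x == y) * G) -> \sum_(x < n | P x) F x <= G.
Proof.
move=> H; apply: (@leq_trans (\sum_(x < n) (x == y) * G)).
  rewrite [X in _ <= X](bigID P) /=; apply: (leq_trans _ (leq_addr _ _)).
  by apply: leq_sum => x Px; apply: H.
rewrite (bigD1 y) //= eqxx mul1n big1 ?addn0 // => x /negbTE ->; by rewrite mul0n.
Qed.

Lemma count_flattenS (T : Type) (Q : pred T) (A : seq (seq T)) :
  count Q (flatten A) = \sum_(a <- A) count Q a.
Proof. by elim: A => [|a A IH]; rewrite ?big_nil //= count_cat big_cons IH. Qed.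

Definition mvL n := (flatten (flatten (flatten (flatten
    [seq [seq [seq [seq [seq (s *: @move n i j k l)%R | s <- [:: 1%R; (-1)%R]]
                       | l : 'I_n <- [seq l : 'I_n <- enum 'I_n | (j < l)%N]]
                  | j : 'I_n <- enum 'I_n]
             | k : 'I_n <- [seq k : 'I_n <- enum 'I_n | (i < k)%N]]
        | i : 'I_n <- enum 'I_n])))).

Lemma moves_mvL n : moves n = undup (mvL n). Proof. by []. Qed.

Lemma count_mvL n (Q : pred 'M[int]_n) :
  count Q (mvL n) = \sum_(i < n) \sum_(k < n | i < k) \sum_(j < n) \sum_(l < n | j < l)
     (Q (1 *: move i j k l)%R + Q ((-1) *: move i j k l)%R).
Proof.
rewrite /mvL count_flattenS !big_flatten /= big_map big_enum /=.
apply: eq_bigr => i _; rewrite big_map big_filter big_enum_cond /=.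
apply: eq_bigr => k _; rewrite big_map big_enum /=.
apply: eq_bigr => j _; rewrite big_map big_filter big_enum_cond /=.
apply: eq_bigr => l _ /=; by rewrite addn0.
Qed.

Lemma uniq_mvL n : uniq (mvL n).
Proof.
apply: uniq_of_count => b; rewrite count_mvL.
set S := (X in X <= 1).
case: (posnP S) => [->//|].
rewrite /S => /sum_witness [i0 _ /sum_witness [k0 ik0 /sum_witness [j0 _
   /sum_witness [l0 jl0 Hpos]]]].
have ikn0 : i0 != k0 by rewrite neq_ltn ik0.
have jln0 : j0 != l0 by rewrite neq_ltn jl0.
have [s0 [s0nz Hb]] : exists s0 : int, s0 != 0%R /\ b = (s0 *: move i0 j0 k0 l0)%R.
  move: Hpos => /=.
  case: (eqVneq (1 *: move i0 j0 k0 l0)%R b) => [<-|_]; first by exists 1%R; rewrite oner_eq0.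
  case: (eqVneq ((-1) *: move i0 j0 k0 l0)%R b) => [<-|_] //.
  by exists (-1)%R; rewrite oppr_eq0 oner_eq0.
subst b.
apply: (@sum_delta _ _ _ i0) => i _.
have H1 : forall x y : 'I_n, 0 < (x == y) -> x = y by move=> x y; case: eqP.
apply: (@sum_delta _ _ _ k0) => k ik.
apply: (@sum_delta _ _ _ j0) => j _.
apply: (@sum_delta _ _ _ l0) => l jl.
have m1 : ((-1 : int) != 0)%R by [].
have ikn : i != k by rewrite neq_ltn ik.
have jln : j != l by rewrite neq_ltn jl.
rewrite /=.
case: (eqVneq (s0 *: move i0 j0 k0 l0)%R (1 *: move i j k l)%R) => [E|E];
 case: (eqVneq (s0 *: move i0 j0 k0 l0)%R ((-1) *: move i j k l)%R) => [E'|E'] //=.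
- have [_ _ _ _ e1] := move_inj ik0 jl0 ik jl s0nz (oner_neq0 _) E.
  have [_ _ _ _ e2] := move_inj ik0 jl0 ik jl s0nz m1 E'.
  by move: e2; rewrite e1 => /eqP; rewrite -addr_eq0.
- have [-> -> -> -> _] := move_inj ik0 jl0 ik jl s0nz (oner_neq0 _) E.
  by rewrite !eqxx.
- have [-> -> -> -> _] := move_inj ik0 jl0 ik jl s0nz m1 E'.
  by rewrite !eqxx.
Qed.

Definition hh n (v : 'M[nat]_n) (i k a b : 'I_n) : nat := (0 < v i a) && (0 < v k b).
Definition ff n (v : 'M[nat]_n) (i k : 'I_n) : nat :=
  \sum_(a < n) \sum_(b < n | a != b) hh v i k a b.

Lemma exch_cond n (Q : 'I_n -> 'I_n -> bool) (F : 'I_n -> 'I_n -> nat) :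
  \sum_(a < n) \sum_(b < n | Q a b) F a b = \sum_(b < n) \sum_(a < n | Q a b) F a b.
Proof.
under eq_bigr do rewrite big_mkcond.
rewrite exchange_big /=; apply: eq_bigr => b _; by rewrite [RHS]big_mkcond.
Qed.

Lemma ff_split n (v : 'M[nat]_n) (i k : 'I_n) :
  \sum_(j < n) \sum_(l < n | j < l) (hh v i k l j + hh v i k j l) = ff v i k.
Proof.
rewrite /ff.
under eq_bigr do rewrite big_split /=.
rewrite big_split /= exch_cond addnC.
rewrite -big_split /=; apply: eq_bigr => a _.

rewrite [RHS](bigID (fun b : 'I_n => a < b)) /=; congr (_ + _); apply: eq_bigl => b.
- by rewrite neq_ltn; case: ltngtP.
- by rewrite neq_ltn; case: ltngtP.
Qed.

Lemma deg_ff n (v : 'M[nat]_n) : deg v = \sum_(i < n) \sum_(k < n | i < k) ff v i k.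
Proof.
rewrite deg_okb moves_mvL undup_id ?uniq_mvL // count_mvL.
apply: eq_bigr => i _; apply: eq_bigr => k ik; rewrite -ff_split.
apply: eq_bigr => j _; apply: eq_bigr => l jl.
have ikn : i != k by rewrite neq_ltn ik.
have jln : j != l by rewrite neq_ltn jl.
by rewrite ok_plus // ok_minus.
Qed.

Lemma cntA m k : \sum_(i < m | i < k) 1 = minn k m.
Proof.
rewrite -(big_mkord (fun i => i < k) (fun _ => 1)) big_mkcond /=.
elim: m => [|m IH]; first by rewrite big_geq //; lia.
rewrite big_nat_recr //= IH; case: ltnP => h; lia.
Qed.

Lemma cntB m i : \sum_(k < m | i < k) 1 = m - i.+1.
Proof.
rewrite -(big_mkord (fun k => i < k) (fun _ => 1)) big_mkcond /=.
elim: m => [|m IH]; first by rewrite big_geq.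
rewrite big_nat_recr //= IH; case: ltnP => h; lia.
Qed.

Lemma cnt_pairs n : \sum_(i < n) \sum_(k < n | i < k) 1 = 'C(n, 2).
Proof.
rewrite exch_cond -bin2_sum big_mkord; apply: eq_bigr => k _.
rewrite cntA; have := ltn_ord k; lia.
Qed.

Lemma pick_sum n (i0 : 'I_n) (F : 'I_n -> nat) :
  \sum_(i < n) (i == i0) * F i = F i0.
Proof.
rewrite (bigD1 i0) //= eqxx mul1n big1 ?addn0 // => x /negbTE ->; by rewrite mul0n.
Qed.

Lemma cnt_extra n (i0 : 'I_n) :
  \sum_(i < n) \sum_(k < n | i < k) ((i == i0) + (k == i0)) = n - 1.
Proof.
under eq_bigr do rewrite big_split /=.
rewrite big_split /= [X in _ + X = _]exch_cond.
have -> : \sum_(i < n) \sum_(k < n | i < k) (i == i0 : nat) =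
          \sum_(i < n) (i == i0) * \sum_(k < n | i < k) 1.
  by apply: eq_bigr => i _; rewrite big_distrr /=; apply: eq_bigr => k _; rewrite muln1.
have -> : \sum_(k < n) \sum_(i < n | i < k) (k == i0 : nat) =
          \sum_(k < n) (k == i0) * \sum_(i < n | i < k) 1.
  by apply: eq_bigr => i _; rewrite big_distrr /=; apply: eq_bigr => k _; rewrite muln1.
rewrite !pick_sum cntA cntB; have := ltn_ord i0; lia.
Qed.

Section Vertex.
Variables (n r : nat) (v : 'M[nat]_n).
Hypothesis hr : 1 <= r.
Hypothesis hv : is_vertex r v.

Lemma col_two (i k a : 'I_n) : i != k -> v i a + v k a <= r.
Proof.
move=> ik; case: hv => _ /(_ a) <-.
rewrite (bigD1 i) //= (bigD1 k) 1?eq_sym //= addnA; exact: leq_addr.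
Qed.

Lemma row_two (i a b : 'I_n) : a != b -> v i a + v i b <= r.
Proof.
move=> ab; case: hv => /(_ i) <- _.
rewrite (bigD1 a) //= (bigD1 b) 1?eq_sym //= addnA; exact: leq_addr.
Qed.

Lemma row_pos (i : 'I_n) : exists a, 0 < v i a.
Proof.
case: hv => /(_ i) H _.
have : 0 < \sum_(a < n | true) v i a by rewrite H.
by case/sum_witness => a _ h; exists a.
Qed.

Lemma row_other (i a : 'I_n) : v i a < r -> exists2 b, b != a & 0 < v i b.
Proof.
move=> h; case: hv => /(_ i) H _.
move: H; rewrite (bigD1 a) //=; set S := (X in _ + X = _) => H.
have : 0 < S by lia.
by rewrite /S; case/sum_witness => b h1 h2; exists b.
Qed.

Lemma ff_term (i k a b : 'I_n) : a != b -> hh v i k a b <= ff v i k.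
Proof.
move=> ab; rewrite /ff (bigD1 a) //= (bigD1 b) //= -addnA; exact: leq_addr.
Qed.

Lemma ff_two (i k a1 b1 a2 b2 : 'I_n) : a1 != a2 -> a1 != b1 -> a2 != b2 ->
  0 < v i a1 -> 0 < v k b1 -> 0 < v i a2 -> 0 < v k b2 -> 2 <= ff v i k.
Proof.
move=> a12 ab1 ab2 h1 h1' h2 h2'; rewrite /ff (bigD1 a1) //= [X in _ + X](bigD1 a2) 1?eq_sym //=.
have L a b : a != b -> hh v i k a b <= \sum_(b' < n | a != b') hh v i k a b'.
  by move=> ab; rewrite (bigD1 b) //=; exact: leq_addr.

have := L _ _ ab1; have := L _ _ ab2; rewrite /hh h1 h1' h2 h2' /=; lia.
Qed.

Lemma ff_ge1 (i k : 'I_n) : i != k -> 1 <= ff v i k.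
Proof.
move=> ik; have [a ha] := row_pos i; have [b hb] := row_pos k.
case: (eqVneq a b) => [eab|nab].
- subst b; have hc := @col_two i k a ik.
  have [a' a'a ha'] : exists2 a', a' != a & 0 < v i a' by apply: row_other; lia.
  apply: (leq_trans _ (@ff_term i k a' a a'a)); by rewrite /hh ha' hb.
- apply: (leq_trans _ (@ff_term i k a b nab)); by rewrite /hh ha hb.
Qed.

Lemma ff_ge2 (i k a1 a2 : 'I_n) : i != k -> a1 != a2 -> 0 < v i a1 -> 0 < v i a2 ->
  2 <= ff v i k.
Proof.
move=> ik a12 h1 h2; have [b hb] := row_pos k.
case: (eqVneq b a1) => [eb1|nb1]; last case: (eqVneq b a2) => [eb2|nb2].
- subst b; have hc := @col_two i k a1 ik.
  have [b' b'b hb'] : exists2 b', b' != a1 & 0 < v k b' by apply: row_other; lia.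
  by apply: (@ff_two _ _ a2 a1 a1 b') => //; rewrite eq_sym.
- subst b; have hc := @col_two i k a2 ik.
  have [b' b'b hb'] : exists2 b', b' != a2 & 0 < v k b' by apply: row_other; lia.
  by apply: (@ff_two _ _ a1 a2 a2 b') => //; rewrite eq_sym.
- by apply: (@ff_two _ _ a1 b a2 b) => //; rewrite eq_sym.
Qed.

Lemma entry_le (i a : 'I_n) : v i a <= r.
Proof. case: hv => /(_ i) <- _; rewrite (bigD1 a) //=; exact: leq_addr. Qed.

Hypothesis hall : forall i j : 'I_n, 0 < v i j -> v i j = r.

Lemma pos_uniq (i a a' : 'I_n) : 0 < v i a -> 0 < v i a' -> a = a'.
Proof.
move=> h h'; case: (eqVneq a a') => // aa'.
have := @row_two i a a' aa'; rewrite (hall h) (hall h'); lia.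
Qed.

Lemma ff_le1 (i k : 'I_n) : ff v i k <= 1.
Proof.
have [a0 ha0] := row_pos i; have [b0 hb0] := row_pos k.
rewrite /ff; apply: (@sum_delta _ _ _ a0) => a _.
apply: (@sum_delta _ _ _ b0) => b _.
rewrite /hh; case: (boolP (0 < v i a)) => ha; case: (boolP (0 < v k b)) => hb //=.
by rewrite (pos_uniq ha ha0) (pos_uniq hb hb0) !eqxx.
Qed.
End Vertex.
Lemma arith n : (n + 2) * (n - 1) %/ 2 = 'C(n, 2) + (n - 1).
Proof.
have key : (n + 2) * (n - 1) = ('C(n, 2) + (n - 1)) * 2.
  elim: n => [|n IH] //.
  rewrite binS bin1.
  move: IH; set c := 'C(n, 2); nia.
by rewrite key mulnK.
Qed.



Lemma ff_sym n (v : 'M[nat]_n) (i k : 'I_n) : ff v i k = ff v k i.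
Proof.
rewrite /ff exch_cond; apply: eq_bigr => a _; apply: eq_big => b.
  by rewrite eq_sym.
by rewrite /hh andbC.
Qed.

Theorem lemma2p1 (n r : nat) (hn : 1 <= n) (hr : 1 <= r)
  (v : 'M[nat]_n) (hv : is_vertex r v) :
  ((forall i j : 'I_n, 0 < v i j -> v i j = r) ->
     deg v = 'C(n, 2) /\ is_min_degree n r (deg v)) /\
  (~ (forall i j : 'I_n, 0 < v i j -> v i j = r) ->
     (n + 2) * (n - 1) %/ 2 <= deg v /\ (n + 2) * (n - 1) %/ 2 = 'C(n, 2) + (n - 1)).
Proof.
have lb : forall w : 'M[nat]_n, is_vertex r w -> 'C(n, 2) <= deg w.
  move=> w hw; rewrite deg_ff -cnt_pairs; apply: leq_sum => i _; apply: leq_sum => k ik.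
  by apply: (ff_ge1 hr hw); rewrite neq_ltn ik.
split.
- move=> hall.
  have Hd : deg v = 'C(n, 2).
    rewrite deg_ff -cnt_pairs; apply: eq_bigr => i _; apply: eq_bigr => k ik.
    apply/eqP; rewrite eqn_leq (ff_le1 hr hv hall) (ff_ge1 hr hv) //.
    by rewrite neq_ltn ik.
  split=> //; split; first by exists v.
  by move=> w hw; rewrite Hd; apply: lb.
- move=> hnot; rewrite arith; split=> //.
  have [i0 [j0 [hp hne]]] : exists i0 j0, 0 < v i0 j0 /\ v i0 j0 != r.
    case: (boolP [exists i, exists j, (0 < v i j) && (v i j != r)]).
      by case/existsP => i /existsP [j /andP [h1 h2]]; exists i, j.
    move=> H; exfalso; apply: hnot => i j h; apply/eqP; apply: contraNT H => hne.
    by apply/existsP; exists i; apply/existsP; exists j; rewrite h hne.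
  have hlt : v i0 j0 < r by rewrite ltn_neqAle hne (entry_le hv).
  have [a2 a2j ha2] := row_other hr hv hlt.
  rewrite -cnt_pairs -(cnt_extra i0) -big_split /= deg_ff.
  apply: leq_sum => i _; rewrite -big_split /=; apply: leq_sum => k ik.
  have ikn : i != k by rewrite neq_ltn ik.
  case: (eqVneq i i0) => [ei|ni]; case: (eqVneq k i0) => [ek|nk] /=.
  + by subst; rewrite eqxx in ikn.
  + subst i; exact: (ff_ge2 hr hv ikn a2j ha2 hp).
  + subst k; rewrite ff_sym; apply: (ff_ge2 hr hv _ a2j ha2 hp); by rewrite eq_sym.
  + exact: (ff_ge1 hr hv ikn).
Qed.
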